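(* Let $V$ be countably infinite, $\psi:K_V\to\mathbb N$ a fixed bijection, $G_0\in\mathscr{G}_0(V)\cup\mathscr{G}_1(V)$, $\varphi\in\ell^1_+(K_V)$, and $f(G):=d_\varphi(G_0,G)$. The following are equivalent: (1) the limit $c_\varphi := \lim_{n\to\infty}2^n\varphi(\psi^{-1}(n))$ exists; (2) $f'(G)$ exists for some $G\in\mathscr{G}(V)\setminus\{\emptyset,K_V\}$ with $G\Delta G_0\in\mathscr{G}_0(V)\cup\mathscr{G}_1(V)$. In this case $f'(G)$ exists for every $G\in\mathscr{G}(V)\setminus\{\emptyset,K_V\}$ with $G\Delta G_0\in\mathscr{G}_0(V)\cup\mathscr{G}_1(V)$, and $f'(G) = c_\varphi$ if $G, G\Delta G_0$ both lie in $\mathscr{G}_0(V)$ or both lie in $\mathscr{G}_1(V)$, while $f'(G) = -c_\varphi$ if $(G, G\Delta G_0)\in\mathscr{G}_i(V)\times\mathscr{G}_{1-i}(V)$ for some $i\in\{0,1\}$.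
   Context: $K_V$ is the set of $2$-element subsets of $V$; $\mathscr{G}(V)$ is the set of simple graphs on $V$ identified with their edge sets, with the product topology of $\{0,1\}^{K_V}$; $\mathscr{G}_0(V)$, $\mathscr{G}_1(V)$ are the graphs with finitely, resp. co-finitely, many edges; $\mathscr{G}'(V):=\mathscr{G}(V)\setminus(\mathscr{G}_0(V)\cup\mathscr{G}_1(V))$. $\ell^1_+(K_V)$ is the set of $\varphi:K_V\to(0,\infty)$ with $\sum_e\varphi(e)<\infty$, and $d_\varphi(G_1,G_2):=\sum_{e\in G_1\Delta G_2}\varphi(e)$. $\mathbb N=\{1,2,\dots\}$, $\|G\|_{\psi,2}:=\sum_{e\in G}2^{-\psi(e)}$. For $f:\mathscr{G}(V)\to\mathbb R$ and $G\ne\emptyset,K_V$, $f'(G) := \lim_{G_1\to G,\ G_1\in\mathscr{G}'(V)\setminus\{G\}} \frac{f(G_1)-f(G)}{\|G_1\|_{\psi,2}-\|G\|_{\psi,2}}$ (limit in the product topology) if it exists. *)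

(* Defs.v *)
From Stdlib Require Import Reals Lra List ClassicalEpsilon.
Open Scope R_scope.

Definition countably_infinite (V : Type) : Prop :=
  exists g : nat -> V, (forall m n, g m = g n -> m = n) /\ (forall v, exists n, g n = v).

Definition is_two_subset {V : Type} (S : V -> Prop) : Prop :=
  exists x y : V, x <> y /\ forall z, S z <-> (z = x \/ z = y).
Definition edge (V : Type) : Type := {S : V -> Prop | is_two_subset S}.

(* simple graphs on V, identified with their edge sets *)
Definition graph (V : Type) : Type := edge V -> Prop.

Definition finite_set {T : Type} (P : T -> Prop) : Prop :=
  exists l : list T, forall x, P x -> In x l.

(* G_0(V): finitely many edges;  G_1(V): co-finitely many edges *)
Definition fin_graph {V : Type} (G : graph V) : Prop := finite_set G.
Definition cofin_graph {V : Type} (G : graph V) : Prop := finite_set (fun e => ~ G e).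
Definition gprime {V : Type} (G : graph V) : Prop := ~ fin_graph G /\ ~ cofin_graph G.

Definition nonempty_graph {V : Type} (G : graph V) : Prop := exists e, G e.
Definition nonfull_graph {V : Type} (G : graph V) : Prop := exists e, ~ G e.

Definition symdiff {V : Type} (G H : graph V) : graph V :=
  fun e => (G e /\ ~ H e) \/ (H e /\ ~ G e).

(* unordered sums of nonnegative families: supremum of finite subsums *)
Fixpoint list_sum {T : Type} (w : T -> R) (l : list T) : R :=
  match l with nil => 0 | x :: l' => w x + list_sum w l' end.

Definition finite_subsum {T : Type} (w : T -> R) (P : T -> Prop) (s : R) : Prop :=
  exists l : list T, NoDup l /\ Forall P l /\ s = list_sum w l.

Definition set_sum {T : Type} (w : T -> R) (P : T -> Prop) : R :=
  epsilon (inhabits 0) (fun s => is_lub (finite_subsum w P) s).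

Definition l1_plus {V : Type} (phi : edge V -> R) : Prop :=
  (forall e, 0 < phi e) /\ bound (finite_subsum phi (fun _ => True)).

Definition d_phi {V : Type} (phi : edge V -> R) (G1 G2 : graph V) : R :=
  set_sum phi (symdiff G1 G2).

Definition psi_bijection {V : Type} (psi : edge V -> nat) : Prop :=
  (forall e1 e2, psi e1 = psi e2 -> e1 = e2) /\
  (forall e, (1 <= psi e)%nat) /\
  (forall n, (1 <= n)%nat -> exists e, psi e = n).

Definition norm_psi2 {V : Type} (psi : edge V -> nat) (G : graph V) : R :=
  set_sum (fun e => / 2 ^ (psi e)) G.

(* f'(G) = L : limit in the product topology over G1 in G'(V) \ {G}.
   Basic neighbourhoods of G: graphs agreeing with G on a finite list of edges. *)
Definition has_deriv {V : Type} (psi : edge V -> nat) (f : graph V -> R)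
    (G : graph V) (L : R) : Prop :=
  forall eps, 0 < eps ->
    exists l : list (edge V),
      forall G1 : graph V,
        gprime G1 ->
        ~ (forall e, G1 e <-> G e) ->
        (forall e, In e l -> (G1 e <-> G e)) ->
        Rabs ((f G1 - f G) / (norm_psi2 psi G1 - norm_psi2 psi G) - L) < eps.

Definition psi_limit {V : Type} (psi : edge V -> nat) (phi : edge V -> R) (c : R) : Prop :=
  forall eps, 0 < eps ->
    exists N : nat, forall (n : nat) (e : edge V), (N <= n)%nat -> psi e = n ->
      Rabs (2 ^ n * phi e - c) < eps.

(* Main.v *)
Require Import Defs.
From Stdlib Require Import Reals List.
From Stdlib Require Import Lra Classical ClassicalEpsilon Lia.
Open Scope R_scope.

Section Sums.
Context {T : Type} (w : T -> R).

Lemma list_sum_app l1 l2 : Defs.list_sum w (l1 ++ l2) = Defs.list_sum w l1 + Defs.list_sum w l2.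
Proof. induction l1; simpl; [lra|rewrite IHl1; lra]. Qed.

Hypothesis wpos : forall x, 0 < w x.

Lemma list_sum_nonneg l : 0 <= Defs.list_sum w l.
Proof. induction l; simpl; [lra| pose proof (wpos a); lra]. Qed.

Lemma list_sum_incl l : forall m, NoDup l -> incl l m -> Defs.list_sum w l <= Defs.list_sum w m.
Proof.
  induction l as [|a l IH]; intros m nd inc; simpl.
  - apply list_sum_nonneg.
  - assert (Ha: In a m) by (apply inc; left; auto).
    destruct (in_split _ _ Ha) as [m1 [m2 ->]].
    inversion nd; subst.
    assert (incl l (m1 ++ m2)).
    { intros x Hx. assert (In x (m1 ++ a :: m2)) by (apply inc; right; auto).
      apply in_app_or in H. apply in_or_app. destruct H as [H|[H|H]]; auto.
      subst; contradiction. }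
    specialize (IH _ H2 H). rewrite !list_sum_app in *. simpl. lra.
Qed.

Hypothesis wbnd : bound (finite_subsum w (fun _ => True)).

Lemma fs_bound P : bound (finite_subsum w P).
Proof.
  destruct wbnd as [M HM]. exists M. intros s [l [nd [F ->]]]. apply HM.
  exists l; repeat split; auto. apply Forall_forall; auto.
Qed.

Lemma set_sum_lub P : is_lub (finite_subsum w P) (set_sum w P).
Proof.
  unfold set_sum. apply epsilon_spec.
  destruct (completeness _ (fs_bound P)) as [m Hm].
  - exists 0, nil. repeat split; auto. constructor.
  - exists m; auto.
Qed.

Lemma set_sum_ge l P : NoDup l -> Forall P l -> Defs.list_sum w l <= set_sum w P.
Proof. intros. apply (proj1 (set_sum_lub P)). exists l; auto. Qed.

Lemma set_sum_le P M : (forall l, NoDup l -> Forall P l -> Defs.list_sum w l <= M) -> set_sum w P <= M.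
Proof. intros H. apply (proj2 (set_sum_lub P)). intros s [l [nd [F ->]]]. auto. Qed.

Lemma set_sum_nonneg P : 0 <= set_sum w P.
Proof. apply (set_sum_ge nil P); constructor. Qed.

Lemma set_sum_mono P Q : (forall x, P x -> Q x) -> set_sum w P <= set_sum w Q.
Proof.
  intros H. apply set_sum_le. intros l nd F. apply set_sum_ge; auto.
  eapply Forall_impl; eauto.
Qed.

Lemma set_sum_ext P Q : (forall x, P x <-> Q x) -> set_sum w P = set_sum w Q.
Proof.
  intros H. apply Rle_antisym; apply set_sum_mono; firstorder.
Qed.

Lemma set_sum_pos P a : P a -> 0 < set_sum w P.
Proof.
  intros. eapply Rlt_le_trans; [|apply (set_sum_ge (a::nil))].
  - simpl. pose proof (wpos a); lra.
  - constructor; auto. constructor.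
  - constructor; auto.
Qed.

Lemma set_sum_single a : set_sum w (fun x => x = a) = w a.
Proof.
  apply Rle_antisym.
  - apply set_sum_le. intros l nd F.
    replace (w a) with (Defs.list_sum w (a :: nil)) by (simpl; lra).
    apply list_sum_incl; auto. intros x Hx. rewrite Forall_forall in F.
    rewrite (F x Hx). left; auto.
  - replace (w a) with (Defs.list_sum w (a :: nil)) by (simpl; lra).
    apply set_sum_ge; repeat constructor; auto.
Qed.

Lemma split_list (P Q : T -> Prop) l : NoDup l -> Forall (fun x => P x \/ Q x) l ->
  exists l1 l2, NoDup l1 /\ NoDup l2 /\ Forall P l1 /\ Forall Q l2 /\
    incl l1 l /\ incl l2 l /\ Defs.list_sum w l = Defs.list_sum w l1 + Defs.list_sum w l2.
Proof.
  induction l as [|a l IH]; intros nd F.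
  - exists nil, nil. repeat split; try constructor; try (intros x Hx; inversion Hx). simpl; lra.
  - inversion nd; subst. inversion F; subst.
    destruct (IH H2 H4) as [l1 [l2 [n1 [n2 [F1 [F2 [i1 [i2 E]]]]]]]].
    destruct H3 as [Pa|Qa].
    + exists (a :: l1), l2. repeat split; auto.
      * constructor; auto.
      * intros x Hx; destruct Hx; [subst; left; auto| right; auto].
      * intros x Hx; right; auto.
      * simpl; lra.
    + exists l1, (a :: l2). repeat split; auto.
      * constructor; auto.
      * intros x Hx; right; auto.
      * intros x Hx; destruct Hx; [subst; left; auto| right; auto].
      * simpl; lra.
Qed.

Lemma set_sum_add (P Q R0 : T -> Prop) :
  (forall x, P x -> Q x -> False) -> (forall x, R0 x <-> P x \/ Q x) ->
  set_sum w R0 = set_sum w P + set_sum w Q.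
Proof.
  intros dis HR. apply Rle_antisym.
  - apply set_sum_le. intros l nd F.
    assert (F' : Forall (fun x => P x \/ Q x) l).
    { eapply Forall_impl; [|exact F]. intros; apply HR; auto. }
    destruct (split_list P Q l nd F') as [l1 [l2 [n1 [n2 [F1 [F2 [i1 [i2 E]]]]]]]].
    rewrite E. pose proof (set_sum_ge l1 P n1 F1). pose proof (set_sum_ge l2 Q n2 F2). lra.
  - assert (H1: forall l2, NoDup l2 -> Forall Q l2 -> Defs.list_sum w l2 <= set_sum w R0 - set_sum w P).
    { intros l2 n2 F2.
      assert (set_sum w P <= set_sum w R0 - Defs.list_sum w l2); [|lra].
      apply set_sum_le. intros l1 n1 F1.
      assert (Defs.list_sum w (l1 ++ l2) <= set_sum w R0); [|rewrite list_sum_app in H; lra].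
      apply set_sum_ge.
      + apply NoDup_app; auto. intros a Ha Hb.
        rewrite Forall_forall in F1, F2. eapply dis; eauto.
      + apply Forall_app; split; (eapply Forall_impl; [|eassumption]); intros; apply HR; auto. }
    pose proof (set_sum_le Q _ H1). lra.
Qed.

End Sums.

Lemma list_cmp_le {T : Type} (w1 w2 : T -> R) k l :
  Forall (fun x => w1 x <= k * w2 x) l -> Defs.list_sum w1 l <= k * Defs.list_sum w2 l.
Proof. induction l; simpl; intros F; [lra|]. inversion F; subst. specialize (IHl H2). lra. Qed.

Lemma set_cmp_le {T : Type} (w1 w2 : T -> R) (b1 : bound (finite_subsum w1 (fun _ => True)))
  (b2 : bound (finite_subsum w2 (fun _ => True))) k P : 0 <= k ->
  (forall x, P x -> w1 x <= k * w2 x) -> set_sum w1 P <= k * set_sum w2 P.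
Proof.
  intros hk H. apply (set_sum_le w1 b1). intros l nd F.
  eapply Rle_trans; [apply list_cmp_le|].
  - rewrite Forall_forall in *. auto.
  - apply Rmult_le_compat_l; auto. apply (set_sum_ge w2 b2); auto.
Qed.

Lemma set_cmp_ge {T : Type} (w1 w2 : T -> R) (b1 : bound (finite_subsum w1 (fun _ => True)))
  (b2 : bound (finite_subsum w2 (fun _ => True))) k P : 0 <= k ->
  (forall x, P x -> k * w2 x <= w1 x) -> k * set_sum w2 P <= set_sum w1 P.
Proof.
  intros hk H. destruct (Req_dec k 0) as [->|nz].
  - rewrite Rmult_0_l. apply (set_sum_nonneg w1 b1).
  - assert (0 < k) by lra.
    assert (set_sum w2 P <= / k * set_sum w1 P).
    { apply (set_cmp_le w2 w1 b2 b1); [left; apply Rinv_0_lt_compat; auto|].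
      intros x Px. specialize (H x Px).
      apply (Rmult_le_reg_l k); auto. rewrite <- Rmult_assoc, Rinv_r; lra. }
    apply (Rmult_le_compat_l k) in H1; [|lra]. rewrite <- Rmult_assoc, Rinv_r in H1; lra.
Qed.

Section Tail.
Context {T : Type} (w : T -> R) (wpos : forall x, 0 < w x)
  (wbnd : bound (finite_subsum w (fun _ => True))) (ps : T -> nat).

Definition maxps (l : list T) : nat := fold_right (fun e m => Nat.max (ps e) m) 0%nat l.
Lemma maxps_in l e : In e l -> (ps e <= maxps l)%nat.
Proof. induction l; simpl; intros H; [contradiction|destruct H; subst; lia || (specialize (IHl H); lia)]. Qed.

Lemma tail_small d : 0 < d -> exists M, set_sum w (fun x => (M < ps x)%nat) <= d.
Proof.
  intros hd. set (s := set_sum w (fun _ => True)).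
  assert (exists l, NoDup l /\ s - d < Defs.list_sum w l) as [l [nd Hl]].
  { apply NNPP; intro H.
    assert (s <= s - d); [|lra].
    apply (proj2 (set_sum_lub w wbnd (fun _ => True))). intros t [l [nd [F ->]]].
    apply Rnot_lt_le. intro. apply H. eauto. }
  exists (maxps l).
  assert (Hs: s = set_sum w (fun x => (maxps l < ps x)%nat) + set_sum w (fun x => ~ (maxps l < ps x)%nat)).
  { apply (set_sum_add w wbnd); [intros; tauto | intros x; split; auto; intros _; apply classic]. }
  assert (Defs.list_sum w l <= set_sum w (fun x => ~ (maxps l < ps x)%nat)).
  { apply set_sum_ge; auto. apply Forall_forall. intros x Hx. pose proof (maxps_in l x Hx). lia. }
  lra.
Qed.
End Tail.

Definition u {V : Type} (psi : edge V -> nat) (e : edge V) : R := / 2 ^ (psi e).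

Fixpoint geo (s K : nat) : R := match K with O => 0 | S K' => / 2 ^ s + geo (S s) K' end.
Lemma geo_eq K : forall s, geo s K = 2 / 2 ^ s - 2 / 2 ^ (s + K).
Proof.
  induction K; intros s; simpl.
  - rewrite Nat.add_0_r; lra.
  - rewrite IHK. replace (S s + K)%nat with (s + S K)%nat by lia.
    change (2 ^ S s) with (2 * 2 ^ s). assert (0 < 2 ^ s) by (apply pow_lt; lra). field. split; [apply pow_nonzero|]; lra.
Qed.
Lemma geo_list s K : Defs.list_sum (fun n => / 2 ^ n) (seq s K) = geo s K.
Proof. revert s; induction K; intros s; simpl; auto. rewrite IHK; auto. Qed.

Lemma u_summable {V : Type} (psi : edge V -> nat) : psi_bijection psi ->
  (forall x, 0 < u psi x) /\ bound (finite_subsum (u psi) (fun _ => True)).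
Proof.
  intros [inj [ge1 sur]]. split.
  - intros; unfold u; apply Rinv_0_lt_compat, pow_lt; lra.
  - exists 2. intros s [l [nd [_ ->]]].
    assert (E: Defs.list_sum (u psi) l = Defs.list_sum (fun n => / 2 ^ n) (map psi l)).
    { clear nd. induction l; simpl; auto. rewrite IHl; reflexivity. }
    rewrite E.
    assert (Defs.list_sum (fun n => / 2 ^ n) (map psi l) <= Defs.list_sum (fun n => / 2 ^ n) (seq 0 (S (maxps psi l)))).
    { apply list_sum_incl.
      - intros; apply Rinv_0_lt_compat, pow_lt; lra.
      - apply NoDup_map_NoDup_ForallPairs; auto. intros a b _ _; apply inj.
      - intros n Hn. apply in_map_iff in Hn. destruct Hn as [e [<- He]].
        apply in_seq. pose proof (maxps_in psi l e He). lia. }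
    rewrite geo_list, geo_eq in H. simpl plus in H.
    assert (0 < 2 ^ (S (maxps psi l))) by (apply pow_lt; lra).
    assert (0 < 2 / 2 ^ (S (maxps psi l))) by (apply Rdiv_lt_0_compat; lra). unfold Rdiv in *. rewrite pow_O, Rinv_1 in H. lra.
Qed.

Lemma edges_upto {V : Type} (psi : edge V -> nat) : psi_bijection psi ->
  forall K, exists l, forall e, (psi e <= K)%nat -> In e l.
Proof.
  intros [inj [ge1 sur]]. induction K.
  - exists nil. intros e He. specialize (ge1 e). lia.
  - destruct IHK as [l Hl]. destruct (sur (S K)) as [e' He']; [lia|].
    exists (e' :: l). intros e He. destruct (Nat.eq_dec (psi e) (S K)).
    + left. apply inj. congruence.
    + right. apply Hl. lia.
Qed.

Lemma not_finite_crit {V : Type} (psi : edge V -> nat) (X : edge V -> Prop) :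
  (forall K, exists e, X e /\ (K < psi e)%nat) -> ~ finite_set X.
Proof.
  intros H [l Hl]. destruct (H (maxps psi l)) as [e [Xe He]].
  pose proof (maxps_in psi l e (Hl e Xe)). lia.
Qed.

Definition sgn (b : bool) : R := if b then -1 else 1.

Definition EC {V : Type} (psi : edge V -> nat) (P : graph V) (b : bool) (N : nat) : Prop :=
  forall e, (N < psi e)%nat -> (P e <-> b = true).

Lemma fin_EC {V} (psi : edge V -> nat) P : finite_set P -> exists N, EC psi P false N.
Proof.
  intros [l Hl]. exists (maxps psi l). intros e He. split; [|discriminate].
  intros Pe. pose proof (maxps_in psi l e (Hl e Pe)). lia.
Qed.

Lemma cofin_EC {V} (psi : edge V -> nat) P : finite_set (fun e => ~ P e) -> exists N, EC psi P true N.
Proof.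
  intros [l Hl]. exists (maxps psi l). intros e He. split; auto. intros _.
  apply NNPP. intros nP. pose proof (maxps_in psi l e (Hl e nP)). lia.
Qed.

Lemma EC_mono {V} (psi : edge V -> nat) P b N N' : EC psi P b N -> (N <= N')%nat -> EC psi P b N'.
Proof. intros H h e He. apply H. lia. Qed.

Lemma diff_sign {T} (w : T -> R) (wb : bound (finite_subsum w (fun _ => True))) A B S b :
  (forall e, S e -> (A e <-> b = true)) -> (forall e, ~ S e -> (B e <-> A e)) ->
  (forall e, S e -> (B e <-> ~ A e)) ->
  set_sum w B - set_sum w A = sgn b * set_sum w S.
Proof.
  intros H1 H2 H3. assert (tt: true = true) by reflexivity. assert (ft: false <> true) by discriminate. destruct b; simpl.
  - rewrite (set_sum_add w wb B S A).
    + lra.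
    + intros e Be Se. specialize (H1 e Se). specialize (H3 e Se). tauto.
    + intros e. destruct (classic (S e)) as [Se|nSe].
      * specialize (H1 e Se). specialize (H3 e Se). tauto.
      * specialize (H2 e nSe). tauto.
  - rewrite (set_sum_add w wb A S B).
    + lra.
    + intros e Ae Se. specialize (H1 e Se). tauto.
    + intros e. destruct (classic (S e)) as [Se|nSe].
      * specialize (H1 e Se). specialize (H3 e Se). split; [intros; right; auto|].
        intros _. apply H3. intro Ae. apply H1 in Ae. discriminate.
      * specialize (H2 e nSe). tauto.
Qed.

Section Core.
Context {V : Type} (psi : edge V -> nat) (hpsi : psi_bijection psi)
  (G0 : graph V) (phi : edge V -> R) (hphi : l1_plus phi).

Lemma core G bG bD N (HG : EC psi G bG N) (HD : EC psi (symdiff G G0) bD N) G1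
  (agree : forall e, (psi e <= N)%nat -> (G1 e <-> G e)) :
  d_phi phi G0 G1 - d_phi phi G0 G = sgn bD * set_sum phi (symdiff G1 G) /\
  norm_psi2 psi G1 - norm_psi2 psi G = sgn bG * set_sum (u psi) (symdiff G1 G).
Proof.
  assert (Sbig : forall e, symdiff G1 G e -> (N < psi e)%nat).
  { intros e Se. destruct (Compare_dec.le_lt_dec (psi e) N) as [h|h]; auto.
    specialize (agree e h). unfold symdiff in Se. tauto. }
  split.
  - unfold d_phi. apply diff_sign; [apply hphi| | |].
    + intros e Se. rewrite <- (HD e (Sbig e Se)). unfold symdiff. tauto.
    + intros e nS. unfold symdiff in *.
      destruct (classic (G0 e)), (classic (G e)), (classic (G1 e)); tauto.
    + intros e S. unfold symdiff in *.
      destruct (classic (G0 e)), (classic (G e)), (classic (G1 e)); tauto.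
  - unfold norm_psi2. apply (diff_sign (u psi)); [apply u_summable; auto| | |].
    + intros e Se. apply (HG e (Sbig e Se)).
    + intros e nS. unfold symdiff in *.
      destruct (classic (G e)), (classic (G1 e)); tauto.
    + intros e S. unfold symdiff in *.
      destruct (classic (G e)), (classic (G1 e)); tauto.
Qed.
End Core.

Lemma sign_quot b1 b2 x y L : y <> 0 ->
  Rabs ((sgn b1 * x) / (sgn b2 * y) - L) = Rabs (x / y - sgn b1 * sgn b2 * L).
Proof.
  intros hy. destruct b1, b2; simpl.
  - f_equal. field. auto.
  - replace ((-1 * x) / (1 * y) - L) with (- (x/y - -1*1*L)) by (field; auto). apply Rabs_Ropp.
  - replace ((1 * x) / (-1 * y) - L) with (- (x/y - 1 * -1*L)) by (field; auto). apply Rabs_Ropp.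
  - f_equal. field. auto.
Qed.

Lemma sgn_sq b : sgn b * sgn b = 1.
Proof. destruct b; simpl; lra. Qed.

Lemma deriv_of_limit {V : Type} (psi : edge V -> nat) (hpsi : psi_bijection psi)
  (G0 : graph V) (phi : edge V -> R) (hphi : l1_plus phi) c (Hc : psi_limit psi phi c)
  G bG bD N (HG : EC psi G bG N) (HD : EC psi (symdiff G G0) bD N) :
  has_deriv psi (fun G => d_phi phi G0 G) G (sgn bD * sgn bG * c).
Proof.
  pose proof (u_summable psi hpsi) as [upos ubnd].
  intros eps heps. destruct (Hc (eps/2)) as [N1 HN1]; [lra|].
  destruct (edges_upto psi hpsi (Nat.max N1 N)) as [l Hl]. exists l.
  intros G1 _ Hne Hag.
  assert (agK : forall e, (psi e <= Nat.max N1 N)%nat -> (G1 e <-> G e)) by (intros; apply Hag, Hl; auto).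
  destruct (core psi hpsi G0 phi hphi G bG bD N HG HD G1) as [E1 E2].
  { intros e he. apply agK. lia. }
  rewrite E1, E2.
  set (S := symdiff G1 G).
  assert (Sbig : forall e, S e -> (Nat.max N1 N < psi e)%nat).
  { intros e Se. destruct (Compare_dec.le_lt_dec (psi e) (Nat.max N1 N)) as [h|h]; auto.
    specialize (agK e h). unfold S, symdiff in Se. tauto. }
  assert (exists a, S a) as [a Sa].
  { apply NNPP. intro H. apply Hne. intro e. apply NNPP. intro H'. apply H. exists e.
    unfold S, symdiff. destruct (classic (G1 e)), (classic (G e)); tauto. }
  assert (bnd : forall x, S x -> Rabs (2 ^ psi x * phi x - c) < eps/2).
  { intros x Sx. apply (HN1 (psi x) x); auto. specialize (Sbig x Sx). lia. }
  assert (Supos : 0 < set_sum (u psi) S) by (apply (set_sum_pos (u psi) upos ubnd S a); auto).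
  rewrite sign_quot by lra.
  replace (sgn bD * sgn bG * (sgn bD * sgn bG * c)) with ((sgn bD * sgn bD) * (sgn bG * sgn bG) * c) by ring.
  rewrite !sgn_sq. replace (1*1*c) with c by ring.
  assert (pw : forall x, 0 < 2 ^ psi x) by (intros; apply pow_lt; lra).
  assert (ph : forall x, 0 < phi x) by apply hphi.
  assert (upw : forall x, u psi x * 2 ^ psi x = 1) by (intros; unfold u; apply Rinv_l; apply pow_nonzero; lra).
  assert (kpos : 0 <= c + eps/2).
  { specialize (bnd a Sa). apply Rabs_def2 in bnd. specialize (pw a). specialize (ph a). nra. }
  assert (up : set_sum phi S <= (c + eps/2) * set_sum (u psi) S).
  { apply (set_cmp_le phi (u psi) (proj2 hphi) ubnd); auto.
    intros x Sx. specialize (bnd x Sx). apply Rabs_def2 in bnd. specialize (upw x). specialize (pw x).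
    assert (phi x = (2 ^ psi x * phi x) * u psi x) by (transitivity (phi x * (u psi x * 2 ^ psi x)); [rewrite upw; ring | ring]).
    rewrite H. specialize (upos x). nra. }
  assert (lo : (c - eps/2) * set_sum (u psi) S <= set_sum phi S).
  { destruct (Rle_lt_dec (c - eps/2) 0) as [h|h].
    - pose proof (set_sum_nonneg phi (proj2 hphi) S). nra.
    - apply (set_cmp_ge phi (u psi) (proj2 hphi) ubnd); [lra|].
      intros x Sx. specialize (bnd x Sx). apply Rabs_def2 in bnd. specialize (upw x). specialize (pw x).
      assert (phi x = (2 ^ psi x * phi x) * u psi x) by (transitivity (phi x * (u psi x * 2 ^ psi x)); [rewrite upw; ring | ring]).
      rewrite H. specialize (upos x). nra. }
  set (q := set_sum phi S / set_sum (u psi) S).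
  assert (set_sum phi S = q * set_sum (u psi) S) by (unfold q; field; lra).
  assert (Rabs (q - c) <= eps / 2); [|lra].
  apply Rabs_le. split; nra.
Qed.

Lemma approx p h eps : 0 < h -> 0 <= p -> 0 < eps -> exists d, 0 < d /\
  forall a b, 0 <= a <= d -> 0 <= b <= d -> Rabs ((p + a) / (h + b) - p / h) <= eps.
Proof.
  intros hh hp he. exists (eps * h * h / (h + p)). split.
  - apply Rdiv_lt_0_compat; [|lra]. apply Rmult_lt_0_compat; [apply Rmult_lt_0_compat|]; lra.
  - intros a b [a0 ad] [b0 bd].
    set (d := eps * h * h / (h + p)) in *.
    assert (dE : d * (h + p) = eps * h * h) by (unfold d; field; lra).
    assert (E : (p + a) / (h + b) - p / h = (a * h - p * b) / (h * (h + b))) by (field; lra).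
    rewrite E. set (D := h * (h + b)).
    assert (Dp : h * h <= D) by (unfold D; nra).
    set (Z := (a * h - p * b) / D).
    assert (ZD : Z * D = a * h - p * b) by (unfold Z; field; unfold D; nra).
    assert (B1 : a * h + p * b <= eps * h * h) by nra.
    assert (D0 : 0 < D) by nra.
    assert (-(eps*D) <= Z*D <= eps*D) by nra.
    apply Rabs_le. split.
    + apply (Rmult_le_reg_r D); nra.
    + apply (Rmult_le_reg_r D); nra.
Qed.

Lemma limit_of_deriv {V : Type} (psi : edge V -> nat) (hpsi : psi_bijection psi)
  (G0 : graph V) (phi : edge V -> R) (hphi : l1_plus phi)
  G bG bD N (HG : EC psi G bG N) (HD : EC psi (symdiff G G0) bD N) L
  (Hd : has_deriv psi (fun G => d_phi phi G0 G) G L) :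
  psi_limit psi phi (sgn bD * sgn bG * L).
Proof.
  pose proof (u_summable psi hpsi) as [upos ubnd].
  pose proof hpsi as [inj [ge1 sur]].
  intros eps heps. destruct (Hd (eps/2)) as [l Hl]; [lra|].
  exists (S (Nat.max (maxps psi l) N)). intros n e Hn Hpe.
  assert (hpos : 0 < u psi e) by auto.
  assert (ppos : 0 < phi e) by apply hphi.
  destruct (approx (phi e) (u psi e) (eps/4)) as [d [dpos Hdd]]; try lra.
  destruct (tail_small phi (proj2 hphi) psi d dpos) as [M1 HM1].
  destruct (tail_small (u psi) ubnd psi d dpos) as [M2 HM2].
  set (M := Nat.max (Nat.max M1 M2) n).
  set (T := fun x => (M < psi x)%nat /\ Nat.even (psi x) = true).
  set (S := fun x => x = e \/ T x).
  set (G1 := fun x => (G x /\ ~ S x) \/ (~ G x /\ S x)).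
  assert (agree : forall x, (psi x <= N)%nat -> (G1 x <-> G x)).
  { intros x hx. assert (~ S x).
    { intros [->|[h _]]; unfold M in *; lia. }
    unfold G1. tauto. }
  destruct (core psi hpsi G0 phi hphi G bG bD N HG HD G1 agree) as [E1 E2].
  assert (SE : forall w, bound (finite_subsum w (fun _ => True)) -> (forall x, 0 < w x) ->
     set_sum w (symdiff G1 G) = w e + set_sum w T).
  { intros w wb wp. rewrite (set_sum_ext w wb (symdiff G1 G) S).
    - rewrite (set_sum_add w wb (fun x => x = e) T S).
      + rewrite set_sum_single; auto.
      + intros x -> [h _]. unfold M in h. lia.
      + intros x; unfold S; tauto.
    - intros x. unfold symdiff, G1. destruct (classic (G x)), (classic (S x)); tauto. }
  assert (Tsub : forall K, (K <= M)%nat -> forall x, T x -> (K < psi x)%nat).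
  { intros K hK x [h _]. lia. }
  set (a := set_sum phi T). set (b := set_sum (u psi) T).
  assert (ha : 0 <= a <= d).
  { split; [apply set_sum_nonneg, hphi|]. eapply Rle_trans; [|apply HM1].
    apply set_sum_mono; [apply hphi|]. apply Tsub. unfold M; lia. }
  assert (hb : 0 <= b <= d).
  { split; [apply set_sum_nonneg, ubnd|]. eapply Rle_trans; [|apply HM2].
    apply set_sum_mono; [apply ubnd|]. apply Tsub. unfold M; lia. }
  assert (Hbig : forall K, exists x y, (K < psi x)%nat /\ (K < psi y)%nat /\ (G1 x <-> bG = false) /\ (G1 y <-> bG = true)).
  { intros K. set (Q := Nat.max K (Nat.max M N)).
    destruct (sur (2 * (Q + 1))%nat) as [x hx]; [lia|].
    destruct (sur (2 * (Q + 1) + 1)%nat) as [y hy]; [lia|].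
    exists x, y.
    assert (Sx : S x). { right. split; [unfold Q in *; lia|]. rewrite hx. apply Nat.even_even. }
    assert (nSy : ~ S y).
    { intros [->|[_ h]]; [unfold Q, M in *; lia|]. rewrite hy, Nat.even_odd in h. discriminate. }
    assert (Gx := HG x ltac:(unfold Q in *; lia)). assert (Gy := HG y ltac:(unfold Q in *; lia)).
    repeat split; try (unfold Q in *; lia).
    - unfold G1. intros [[_ h]|[h _]]; [tauto|]. destruct bG; auto. exfalso; apply h, Gx; auto.
    - unfold G1. intros ->. right. split; auto. intro h. apply Gx in h. discriminate.
    - unfold G1. intros [[h _]|[_ h]]; [|tauto]. apply Gy; auto.
    - unfold G1. intros ->. left. split; auto. apply Gy; auto. }
  assert (gp : gprime G1).
  { split.
    - apply (not_finite_crit psi). intros K. destruct (Hbig K) as [x [y [hx [hy [Ex Ey]]]]].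
      destruct bG; [exists y|exists x]; split; auto; tauto.
    - apply (not_finite_crit psi). intros K. destruct (Hbig K) as [x [y [hx [hy [Ex Ey]]]]].
      destruct bG; [exists x|exists y]; split; auto; intro h; [apply Ex in h|apply Ey in h]; discriminate. }
  assert (ne : ~ (forall x, G1 x <-> G x)).
  { intros H. specialize (H e). unfold G1, S in H. tauto. }
  assert (ag : forall x, In x l -> (G1 x <-> G x)).
  { intros x hx. pose proof (maxps_in psi l x hx). assert (~ S x).
    { intros [->|[h _]]; unfold M in *; lia. }
    unfold G1. tauto. }
  specialize (Hl G1 gp ne ag). simpl in Hl.
  rewrite E1, E2, !SE in Hl; try apply hphi; try apply ubnd; auto.
  fold a b in Hl.
  rewrite sign_quot in Hl by lra.
  specialize (Hdd a b ha hb).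
  replace (2 ^ n * phi e) with (phi e / u psi e).
  - pose proof (Rabs_triang ((phi e + a) / (u psi e + b) - sgn bD * sgn bG * L) (phi e / u psi e - (phi e + a) / (u psi e + b))).
    rewrite Rabs_minus_sym in Hdd.
    replace ((phi e + a) / (u psi e + b) - sgn bD * sgn bG * L + (phi e / u psi e - (phi e + a) / (u psi e + b))) with (phi e / u psi e - sgn bD * sgn bG * L) in H by ring.
    lra.
  - unfold u. rewrite Hpe. field. apply pow_nonzero; lra.
Qed.

Lemma EC_of {V} (psi : edge V -> nat) (P : graph V) : fin_graph P \/ cofin_graph P -> exists b N, EC psi P b N.
Proof.
  intros [h|h]; [destruct (fin_EC psi P h) as [N HN] | destruct (cofin_EC psi P h) as [N HN]]; eauto.
Qed.

Lemma EC_G {V} (psi : edge V -> nat) G G0 b0 bD N : EC psi G0 b0 N -> EC psi (symdiff G G0) bD N ->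
  EC psi G (xorb b0 bD) N.
Proof.
  intros H0 HD e he. specialize (H0 e he). specialize (HD e he). unfold symdiff in HD.
  assert (tt: true = true) by reflexivity. assert (ft: false <> true) by discriminate.
  destruct b0, bD; simpl in *; destruct (classic (G e)), (classic (G0 e)); tauto.
Qed.

Lemma deriv_gen {V : Type} (psi : edge V -> nat) (hpsi : psi_bijection psi)
  (G0 : graph V) (phi : edge V -> R) (hphi : l1_plus phi) c (Hc : psi_limit psi phi c) G :
  (fin_graph G \/ cofin_graph G) -> (fin_graph (symdiff G G0) \/ cofin_graph (symdiff G G0)) ->
  exists L, has_deriv psi (fun G => d_phi phi G0 G) G L.
Proof.
  intros h1 h2. destruct (EC_of psi _ h1) as [bG [N1 H1]]. destruct (EC_of psi _ h2) as [bD [N2 H2]].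
  eexists. apply (deriv_of_limit psi hpsi G0 phi hphi c Hc G bG bD (Nat.max N1 N2));
  eapply EC_mono; eauto; lia.
Qed.

Theorem proposition3p7 (V : Type) (hV : countably_infinite V)
  (psi : edge V -> nat) (hpsi : psi_bijection psi)
  (G0 : graph V) (hG0 : fin_graph G0 \/ cofin_graph G0)
  (phi : edge V -> R) (hphi : l1_plus phi) :
  let f := fun G : graph V => d_phi phi G0 G in
  ((exists c, psi_limit psi phi c) <->
   (exists G : graph V, nonempty_graph G /\ nonfull_graph G /\
      (fin_graph (symdiff G G0) \/ cofin_graph (symdiff G G0)) /\
      exists L, has_deriv psi f G L)) /\
  (forall c, psi_limit psi phi c ->
   forall G : graph V, nonempty_graph G -> nonfull_graph G ->
      (fin_graph (symdiff G G0) \/ cofin_graph (symdiff G G0)) ->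
      (((fin_graph G /\ fin_graph (symdiff G G0)) \/
        (cofin_graph G /\ cofin_graph (symdiff G G0))) -> has_deriv psi f G c) /\
      (((fin_graph G /\ cofin_graph (symdiff G G0)) \/
        (cofin_graph G /\ fin_graph (symdiff G G0))) -> has_deriv psi f G (- c))).
Proof.
  intros f. unfold f. clear f.
  pose proof hpsi as [inj [ge1 sur]].
  split; [split|].
  - intros [c Hc].
    destruct (sur 1%nat) as [e1 h1]; [lia|]. destruct (sur 2%nat) as [e2 h2]; [lia|].
    assert (ne : e1 <> e2) by (intros ->; lia).
    destruct (classic (nonempty_graph G0)) as [nE|nE]; [destruct (classic (nonfull_graph G0)) as [nF|nF]|].
    + exists G0. assert (hD : fin_graph (symdiff G0 G0)) by (exists nil; intros x hx; exfalso; unfold symdiff in hx; tauto).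
      repeat split; auto. apply deriv_gen with c; auto.
    + assert (all : forall x, G0 x) by (intros x; apply NNPP; intro; apply nF; exists x; auto).
      exists (fun x => x <> e1).
      assert (hD : fin_graph (symdiff (fun x => x <> e1) G0)).
      { exists (e1 :: nil). intros x hx. unfold symdiff in hx. left. symmetry. specialize (all x).
        destruct (classic (x = e1)); [auto|tauto]. }
      repeat split; auto.
      * exists e2; auto.
      * exists e1; auto.
      * apply deriv_gen with c; auto. right. exists (e1 :: nil). intros x hx. left. symmetry. apply NNPP in hx; auto.
    + assert (none : forall x, ~ G0 x) by (intros x hx; apply nE; exists x; auto).
      exists (fun x => x = e1).
      assert (hD : fin_graph (symdiff (fun x => x = e1) G0)).
      { exists (e1 :: nil). intros x hx. unfold symdiff in hx. left. symmetry. specialize (none x). tauto. }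
      repeat split; auto.
      * exists e1; auto.
      * exists e2; auto.
      * apply deriv_gen with c; auto. left. exists (e1 :: nil). intros x hx. left; symmetry; auto.
  - intros [G [_ [_ [hD [L HL]]]]].
    destruct (EC_of psi _ hG0) as [b0 [N0 H0]]. destruct (EC_of psi _ hD) as [bD [N1 H1]].
    set (N := Nat.max N0 N1).
    assert (H0' : EC psi G0 b0 N) by (eapply EC_mono; eauto; lia).
    assert (H1' : EC psi (symdiff G G0) bD N) by (eapply EC_mono; eauto; lia).
    eexists. apply (limit_of_deriv psi hpsi G0 phi hphi G (xorb b0 bD) bD N); auto.
    apply (EC_G psi G G0 b0 bD N); auto. exact HL.
  - intros c Hc G _ _ _. split.
    + intros [[hG hD]|[hG hD]].
      * destruct (fin_EC psi _ hG) as [N1 H1]. destruct (fin_EC psi _ hD) as [N2 H2].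
        replace c with (sgn false * sgn false * c) by (simpl; ring).
        apply (deriv_of_limit psi hpsi G0 phi hphi c Hc G false false (Nat.max N1 N2));
          eapply EC_mono; eauto; lia.
      * destruct (cofin_EC psi _ hG) as [N1 H1]. destruct (cofin_EC psi _ hD) as [N2 H2].
        replace c with (sgn true * sgn true * c) by (simpl; ring).
        apply (deriv_of_limit psi hpsi G0 phi hphi c Hc G true true (Nat.max N1 N2));
          eapply EC_mono; eauto; lia.
    + intros [[hG hD]|[hG hD]].
      * destruct (fin_EC psi _ hG) as [N1 H1]. destruct (cofin_EC psi _ hD) as [N2 H2].
        replace (- c) with (sgn true * sgn false * c) by (simpl; ring).
        apply (deriv_of_limit psi hpsi G0 phi hphi c Hc G false true (Nat.max N1 N2));
          eapply EC_mono; eauto; lia.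
      * destruct (cofin_EC psi _ hG) as [N1 H1]. destruct (fin_EC psi _ hD) as [N2 H2].
        replace (- c) with (sgn false * sgn true * c) by (simpl; ring).
        apply (deriv_of_limit psi hpsi G0 phi hphi c Hc G true false (Nat.max N1 N2));
          eapply EC_mono; eauto; lia.
Qed.
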